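(* Let $M,N$ be positive integers, let $\Delta>0$ and $T=1/\Delta$, and let $c>0$, $\lambda>0$, $\alpha\in\mathbb{C}$, $v\in\mathbb{R}$. Let $g_{\rm tx},g_{\rm rx}\in L^2(\mathbb{R})$ be (complex-valued) transmit and receive shaping filters, and let $\{X_{\rm TF}[n,m]\}$, $n=0,\dots,N-1$, $m=0,\dots,M-1$, be arbitrary complex numbers. Define, for $n=0,\dots,N-1$, $$x_n(t)=\sum_{m=0}^{M-1}X_{\rm TF}[n,m]\,g_{\rm tx}(t-nT)\,e^{\mathrm{i}2\pi m\Delta(t-nT)}.$$ Let $r:[0,\infty)\to\mathbb{R}$ be any function (the excess target range) and suppose the received signal is (the variation of the target range within each symbol interval being ignored) $$y(t)=\sum_{n=0}^{N-1}\alpha\, x_n\!\left(t-\frac{r(nT)}{c}\right)e^{\mathrm{i}2\pi\frac{v}{\lambda}t}.$$ Define, for $n=0,\dots,N-1$ and $m=0,\dots,M-1$, $$Y_{\rm TF}[n,m]=\int_{-\infty}^{\infty}y(t)\,g_{\rm rx}^{*}(t-nT)\,e^{-\mathrm{i}2\pi m\Delta(t-nT)}\,dt,$$ and the cross-ambiguity function $\gamma(\tau,\nu)=\int_{-\infty}^{\infty}g_{\rm tx}(\beta)\,g_{\rm rx}^{*}(\beta-\tau)\,e^{-\mathrm{i}2\pi\nu(\beta-\tau)}\,d\beta$. Then for all $n=0,\dots,N-1$ and $m=0,\dots,M-1$, $$Y_{\rm TF}[n,m]=\sum_{n'=0}^{N-1}\sum_{m'=0}^{M-1}H_{n,m}[n',m']\,X_{\rm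 TF}[n',m'],$$ where $$H_{n,m}[n',m']=\alpha\, e^{\mathrm{i}2\pi\frac{v}{\lambda}nT}\,e^{-\mathrm{i}2\pi m'\Delta\frac{r(n'T)}{c}}\,\gamma\!\left((n-n')T-\frac{r(n'T)}{c},\,(m-m')\Delta-\frac{v}{\lambda}\right).$$
   Context: $\mathrm{i}$ is the imaginary unit and $(\cdot)^*$ denotes complex conjugation. Physically, $c$ is the speed of light, $\lambda$ the carrier wavelength, $v$ the excess target range-rate, $\alpha$ the target amplitude; $M$ is the number of subcarriers, $N$ the number of symbol intervals, $\Delta$ the subcarrier spacing. *)

(* Defs.v *)
From mathcomp Require Import all_boot all_order all_algebra.
From mathcomp Require Import all_classical all_reals all_analysis.
From mathcomp Require Export complex.
Set Implicit Arguments. Unset Strict Implicit. Unset Printing Implicit Defensive.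
Import Order.TTheory GRing.Theory Num.Theory.
Local Open Scope ring_scope.
Local Open Scope complex_scope.

Section Defs.
Variable R : realType.

Definition expi (th : R) : R[i] := cos th +i* sin th.

Definition cintegral (f : R -> R[i]) : R[i] :=
  (Rintegral (@lebesgue_measure R) setT (fun t => complex.Re (f t)))
  +i* (Rintegral (@lebesgue_measure R) setT (fun t => complex.Im (f t))).

Definition L2 (g : R -> R[i]) : Prop :=
  [/\ measurable_fun setT (fun t => complex.Re (g t)),
      measurable_fun setT (fun t => complex.Im (g t)) &
      (@lebesgue_measure R).-integrable setT
        (fun t => ((complex.Re (g t)) ^+ 2 + (complex.Im (g t)) ^+ 2)%:E)].

Variables (M N : nat).

Definition xsig (gtx : R -> R[i]) (X : 'I_N -> 'I_M -> R[i]) (Delta T : R)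
  (n : 'I_N) (t : R) : R[i] :=
  \sum_(m < M) X n m * gtx (t - n%:R * T)
               * expi (2 * pi * m%:R * Delta * (t - n%:R * T)).

Definition ysig (alpha : R[i]) (gtx : R -> R[i]) (X : 'I_N -> 'I_M -> R[i])
  (Delta T c lam v : R) (r : R -> R) (t : R) : R[i] :=
  \sum_(n < N) alpha * xsig gtx X Delta T n (t - r (n%:R * T) / c)
               * expi (2 * pi * (v / lam) * t).

Definition YTF (grx y : R -> R[i]) (Delta T : R) (n : 'I_N) (m : 'I_M) : R[i] :=
  cintegral (fun t => y t * (grx (t - n%:R * T))^*
                        * expi (- (2 * pi * m%:R * Delta * (t - n%:R * T)))).

Definition xambig (gtx grx : R -> R[i]) (tau nu : R) : R[i] :=
  cintegral (fun b => gtx b * (grx (b - tau))^* * expi (- (2 * pi * nu * (b - tau)))).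

Definition Hcoef (alpha : R[i]) (gtx grx : R -> R[i]) (Delta T c lam v : R)
  (r : R -> R) (n : 'I_N) (m : 'I_M) (n' : 'I_N) (m' : 'I_M) : R[i] :=
  alpha * expi (2 * pi * (v / lam) * (n%:R * T))
        * expi (- (2 * pi * m'%:R * Delta * (r (n'%:R * T) / c)))
        * xambig gtx grx ((n%:R - n'%:R) * T - r (n'%:R * T) / c)
                         ((m%:R - m'%:R) * Delta - v / lam).

End Defs.

(* Main.v *)
Require Import Defs.
From mathcomp Require Import all_boot all_order all_algebra.
From mathcomp Require Import all_classical all_reals all_analysis.
From mathcomp Require Import measurable_realfun.
From mathcomp Require Import complex ring lra.
Import Order.TTheory GRing.Theory Num.Theory.
Local Open Scope ring_scope.
Local Open Scope classical_set_scope.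
Section S.
Variable R : realType.
Notation leb := (@lebesgue_measure R).

Lemma mshift (a : R) : measurable_fun setT (fun x : R => (x - a)%R).
Proof. apply: measurable_realfun.measurable_funB => //. Qed.

Lemma mshiftL (a : R) : measurable_fun (T := measurableTypeR R) (U := measurableTypeR R) setT (fun x : R => (x - a)%R).
Proof. exact: mshift. Qed.

Lemma leb_shift (a : R) (A : set R) : measurable A ->
  leb ((fun x => x - a) @^-1` A) = leb A.
Proof.
move=> mA; symmetry.
have H := @lebesgue_measure_unique R (pushforward leb ((fun x : R => (x - a)%R) : measurableTypeR R -> measurableTypeR R) : {measure set (measurableTypeR R) -> \bar R}).
apply: (H (mshift a)); last exact: mA.
move=> X [[x y] _ <-] /=.
rewrite /pushforward.
have -> : (fun x0 : R => (x0 - a)%R) @^-1` `]x, y] = `]x + a, y + a].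
  by apply/seteqP; split=> t /=; rewrite !in_itv /= ltrBrDr lerBlDr.
rewrite !lebesgue_measure_itv /= !lte_fin ltrD2r; case: ifP => // _.
by rewrite -!EFinD; congr EFin; ring.
Qed.

Local Open Scope ereal_scope.
Lemma ge0_int_shift (f : R -> \bar R) (a : R) : measurable_fun setT f ->
  (forall x, 0 <= f x) ->
  \int[leb]_x f (x - a)%R = \int[leb]_x f x.
Proof.
move=> mf f0.
transitivity (\int[pushforward leb ((fun x : R => (x - a)%R) : measurableTypeR R -> measurableTypeR R)]_(y in setT) f y).
  by rewrite (ge0_integral_pushforward (mshiftL a)) //= preimage_setT.
apply: eq_measure_integral; first exact: mshiftL.
by move=> ? A mA _; have := @leb_shift a A mA; exact.
Qed.

Lemma integrable_shift (f : R -> \bar R) (a : R) :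
  leb.-integrable setT f -> leb.-integrable setT (fun x => f (x - a)%R).
Proof.
move=> /integrableP [mf fi]; apply/integrableP; split.
  by apply: measurableT_comp => //; exact: mshift.
rewrite (ge0_int_shift (fun x => `|f x|)) //.
exact: measurableT_comp.
Qed.

Lemma int_shift (f : R -> \bar R) (a : R) :
  leb.-integrable setT f ->
  \int[leb]_x f (x - a)%R = \int[leb]_x f x.
Proof.
move=> fi.
have mf : measurable_fun setT f by case/integrableP: fi.
transitivity (\int[pushforward leb ((fun x : R => (x - a)%R) : measurableTypeR R -> measurableTypeR R)]_(y in setT) f y).
  rewrite (integral_pushforward (mshiftL a) mf) //= ?preimage_setT //.
  have := @integrable_shift f a fi; exact.
apply: eq_measure_integral; first exact: mshiftL.
by move=> ? A mA _; have := @leb_shift a A mA; exact.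
Qed.

Local Close Scope ereal_scope.
Local Open Scope complex_scope.

Definition rint (f : R -> R) := leb.-integrable setT (EFin \o f).
Definition cint (f : R -> R[i]) :=
  rint (fun t => complex.Re (f t)) /\ rint (fun t => complex.Im (f t)).

Lemma rintD {f g : R -> R} : rint f -> rint g -> rint (fun t => f t + g t).
Proof. by move=> hf hg; apply: (integrableD _ hf hg). Qed.

Lemma rintZ k {f : R -> R} : rint f -> rint (fun t => k * f t).
Proof. by move=> hf; apply: (integrableZl _ k hf). Qed.

Lemma rint0 : rint (fun _ => 0).
Proof. exact: integrable0. Qed.

Lemma RintD {f g : R -> R} : rint f -> rint g ->
  Rintegral leb setT (fun t => f t + g t) = Rintegral leb setT f + Rintegral leb setT g.
Proof. by move=> hf hg; rewrite RintegralD. Qed.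

Lemma RintZ k {f : R -> R} : rint f ->
  Rintegral leb setT (fun t => k * f t) = k * Rintegral leb setT f.
Proof. by move=> hf; rewrite RintegralZl. Qed.

Lemma Rint0 : Rintegral leb setT (fun _ => 0) = 0.
Proof. by rewrite Rintegral_cst // mul0r. Qed.

Lemma rint_shift {f : R -> R} a : rint f -> rint (fun t => f (t - a)).
Proof. by move=> hf; have := @integrable_shift (EFin \o f) a hf; exact. Qed.

Lemma Rint_shift {f : R -> R} a : rint f ->
  Rintegral leb setT (fun t => f (t - a)) = Rintegral leb setT f.
Proof. by move=> hf; rewrite /Rintegral; congr fine; have := @int_shift (EFin \o f) a hf; exact. Qed.

Lemma ReD (x y : R[i]) : complex.Re (x + y) = complex.Re x + complex.Re y.
Proof. by case: x y => a b [c d]. Qed.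
Lemma ImD (x y : R[i]) : complex.Im (x + y) = complex.Im x + complex.Im y.
Proof. by case: x y => a b [c d]. Qed.
Lemma ReM (x y : R[i]) : complex.Re (x * y) = complex.Re x * complex.Re y - complex.Im x * complex.Im y.
Proof. by case: x y => a b [c d]. Qed.
Lemma ImM (x y : R[i]) : complex.Im (x * y) = complex.Re x * complex.Im y + complex.Im x * complex.Re y.
Proof. by case: x y => a b [c d]. Qed.

Lemma cintD f g : cint f -> cint g -> cint (fun t => f t + g t).
Proof.
move=> [hf1 hf2] [hg1 hg2]; split.
  have := rintD hf1 hg1; apply: eq_integrable => // t _ /=; by rewrite ReD.
have := rintD hf2 hg2; apply: eq_integrable => // t _ /=; by rewrite ImD.
Qed.

Lemma cintZ k f : cint f -> cint (fun t => k * f t).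
Proof.
move=> [hf1 hf2]; split.
  have := rintD (rintZ (complex.Re k) hf1) (rintZ (- complex.Im k) hf2).
  apply: eq_integrable => // t _ /=; by rewrite ReM mulNr.
have := rintD (rintZ (complex.Re k) hf2) (rintZ (complex.Im k) hf1).
apply: eq_integrable => // t _ /=; by rewrite ImM.
Qed.

Lemma cint0 : cint (fun _ => 0).
Proof. by split; exact: rint0. Qed.

Lemma cint_shift f a : cint f -> cint (fun t => f (t - a)).
Proof. by move=> [h1 h2]; split; [exact: (rint_shift a h1) | exact: (rint_shift a h2)]. Qed.

Lemma cintegralD f g : cint f -> cint g ->
  cintegral (fun t => f t + g t) = cintegral f + cintegral g.
Proof.
move=> [hf1 hf2] [hg1 hg2]; rewrite /cintegral.
under eq_Rintegral do rewrite ReD.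
under [X in _ +i* X]eq_Rintegral do rewrite ImD.
have e1 := @RintD _ _ hf1 hg1; have e2 := @RintD _ _ hf2 hg2; simpl in e1, e2.
rewrite e1 e2. by [].
Qed.

Lemma cintegralZ k f : cint f ->
  cintegral (fun t => k * f t) = k * cintegral f.
Proof.
move=> [hf1 hf2]; rewrite /cintegral.
under eq_Rintegral do rewrite ReM -mulNr.
under [X in _ +i* X]eq_Rintegral do rewrite ImM.
have e1 := @RintD _ _ (rintZ (complex.Re k) hf1) (rintZ (- complex.Im k) hf2).
have e2 := @RintD _ _ (rintZ (complex.Re k) hf2) (rintZ (complex.Im k) hf1).
simpl in e1, e2; rewrite e1 e2.
have e3 := @RintZ (complex.Re k) _ hf1; have e4 := @RintZ (- complex.Im k) _ hf2.
have e5 := @RintZ (complex.Re k) _ hf2; have e6 := @RintZ (complex.Im k) _ hf1.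
simpl in e3, e4, e5, e6; rewrite e3 e4 e5 e6.
clear e1 e2 e3 e4 e5 e6; by case: k => a b /=; congr (_ +i* _); ring.
Qed.

Lemma cintegral0 : cintegral (fun _ : R => 0) = 0.
Proof. by rewrite /cintegral /= Rint0. Qed.

Lemma cint_sum (I : Type) (s : seq I) (F : I -> R -> R[i]) :
  (forall i, cint (F i)) -> cint (fun t => \sum_(i <- s) F i t).
Proof.
move=> hF; elim: s => [|i s IH].
  have -> : (fun t => \sum_(i <- [::]) F i t) = (fun _ => 0).
    by apply/funext => t; rewrite big_nil.
  exact: cint0.
have -> : (fun t => \sum_(j <- i :: s) F j t) = (fun t => F i t + \sum_(j <- s) F j t).
  by apply/funext => t; rewrite big_cons.
exact: cintD.
Qed.

Lemma cintegral_sum (I : Type) (s : seq I) (F : I -> R -> R[i]) :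
  (forall i, cint (F i)) ->
  cintegral (fun t => \sum_(i <- s) F i t) = \sum_(i <- s) cintegral (F i).
Proof.
move=> hF; elim: s => [|i s IH].
  have -> : (fun t => \sum_(i <- [::]) F i t) = (fun _ => 0).
    by apply/funext => t; rewrite big_nil.
  by rewrite cintegral0 big_nil.
have -> : (fun t => \sum_(j <- i :: s) F j t) = (fun t => F i t + \sum_(j <- s) F j t).
  by apply/funext => t; rewrite big_cons.
rewrite cintegralD ?big_cons ?IH //; exact: cint_sum.
Qed.

Lemma cintegral_shift f a : cint f -> cintegral (fun t => f (t - a)) = cintegral f.
Proof.
move=> [h1 h2]; rewrite /cintegral.
have e1 := @Rint_shift _ a h1; have e2 := @Rint_shift _ a h2; simpl in e1, e2.
by rewrite e1 e2.
Qed.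


Lemma expiD (x y : R) : expi x * expi y = expi (x + y).
Proof. by rewrite /expi /= cosD sinD; congr (_ +i* _); ring. Qed.

Lemma expi_per (x : R) (k : nat) : expi (x + 2 * pi * k%:R) = expi x.
Proof.
have -> : 2 * pi * k%:R = (pi *+ 2) *+ k :> R by rewrite -mulr_natr; ring.
by rewrite /expi (periodicn (@cosD2pi R)) (periodicn (@sinD2pi R)).
Qed.

Lemma bound_aux (a b c d C S : R) : C ^+ 2 + S ^+ 2 = 1 ->
  `|(a * c + b * d) * C - (b * c - a * d) * S| <= a ^+ 2 + b ^+ 2 + c ^+ 2 + d ^+ 2.
Proof.
move=> hCS.
set P := a * c + b * d; set Q := b * c - a * d.
have e : (P * C - Q * S) ^+ 2 + (P * S + Q * C) ^+ 2 = P ^+ 2 + Q ^+ 2.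
  by rewrite -[RHS]mulr1 -hCS; ring.
have h1 : (P * C - Q * S) ^+ 2 <= P ^+ 2 + Q ^+ 2.
  have := sqr_ge0 (P * S + Q * C); lra.
have e2 : P ^+ 2 + Q ^+ 2 = (a ^+ 2 + b ^+ 2) * (c ^+ 2 + d ^+ 2) by rewrite /P /Q; ring.
have h3 : 4 * ((a ^+ 2 + b ^+ 2) * (c ^+ 2 + d ^+ 2)) <= (a ^+ 2 + b ^+ 2 + c ^+ 2 + d ^+ 2) ^+ 2.
  have := sqr_ge0 (a ^+ 2 + b ^+ 2 - (c ^+ 2 + d ^+ 2)); nra.
have y0 : 0 <= a ^+ 2 + b ^+ 2 + c ^+ 2 + d ^+ 2.
  have := sqr_ge0 a; have := sqr_ge0 b; have := sqr_ge0 c; have := sqr_ge0 d; lra.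
move: h1 h3 y0; rewrite e2.
set x := P * C - Q * S; set y := a ^+ 2 + b ^+ 2 + c ^+ 2 + d ^+ 2.
set z := (a ^+ 2 + b ^+ 2) * (c ^+ 2 + d ^+ 2) => h1 h3 y0.
have hxy : x ^+ 2 <= y ^+ 2.
  have : 0 <= z by rewrite /z; apply: mulr_ge0; apply: addr_ge0; apply: sqr_ge0.
  nra.
rewrite ler_norml; apply/andP; split; nra.
Qed.


Lemma ReG (z w : R[i]) (x : R) : complex.Re (z * w^* * expi x) =
  (complex.Re z * complex.Re w + complex.Im z * complex.Im w) * cos x
  - (complex.Im z * complex.Re w - complex.Re z * complex.Im w) * sin x.
Proof. by case: z w => a b [c d]; rewrite /expi /=; ring. Qed.

Lemma ImG (z w : R[i]) (x : R) : complex.Im (z * w^* * expi x) =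
  (complex.Re z * complex.Re w + complex.Im z * complex.Im w) * sin x
  - (complex.Im z * complex.Re w - complex.Re z * complex.Im w) * (- cos x).
Proof. by case: z w => a b [c d]; rewrite /expi /=; ring. Qed.

Lemma L2_shift (g : R -> R[i]) a : L2 g -> L2 (fun t => g (t - a)).
Proof.
move=> [m1 m2 gi]; split.
- exact: (measurableT_comp m1 (mshift a)).
- exact: (measurableT_comp m2 (mshift a)).
- by have := @integrable_shift _ a gi; exact.
Qed.

Lemma mexpr {p q u w c s : R -> R} :
  measurable_fun setT p -> measurable_fun setT q -> measurable_fun setT u ->
  measurable_fun setT w -> measurable_fun setT c -> measurable_fun setT s ->
  measurable_fun setT (fun t => (p t * u t + q t * w t) * c t - (q t * u t - p t * w t) * s t).
Proof.
move=> mp mq mu mw mc ms.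
apply: measurable_funB; apply: measurable_funM => //.
  by apply: measurable_funD; apply: measurable_funM.
by apply: measurable_funB; apply: measurable_funM.
Qed.

Lemma cint_base (f g : R -> R[i]) (th : R -> R) : L2 f -> L2 g ->
  measurable_fun setT (fun t => cos (th t)) ->
  measurable_fun setT (fun t => sin (th t)) ->
  cint (fun t => f t * (g t)^* * expi (th t)).
Proof.
move=> [mf1 mf2 fi] [mg1 mg2 gi] mc ms.
have Hi := integrableD measurableT fi gi.
have y0 : forall t, 0 <= complex.Re (f t) ^+ 2 + complex.Im (f t) ^+ 2 +
    (complex.Re (g t) ^+ 2 + complex.Im (g t) ^+ 2).
  move=> t; have := sqr_ge0 (complex.Re (f t)); have := sqr_ge0 (complex.Im (f t)).
  have := sqr_ge0 (complex.Re (g t)); have := sqr_ge0 (complex.Im (g t)); lra.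
split.
- apply: (le_integrable measurableT _ _ Hi).
    apply/measurable_EFinP.
    have -> : (fun t => complex.Re (f t * (g t)^* * expi (th t))) = (fun t =>
      (complex.Re (f t) * complex.Re (g t) + complex.Im (f t) * complex.Im (g t)) * cos (th t)
      - (complex.Im (f t) * complex.Re (g t) - complex.Re (f t) * complex.Im (g t)) * sin (th t)).
      by apply/funext => t; exact: ReG.
    by have := mexpr mf1 mf2 mg1 mg2 mc ms; exact.
  move=> t _ /=; rewrite lee_fin ReG (ger0_norm (y0 t)).
  apply: le_trans (bound_aux _ _ _ _ _ _ (cos2Dsin2 (th t))) _.
  lra.
- apply: (le_integrable measurableT _ _ Hi).
    apply/measurable_EFinP.
    have -> : (fun t => complex.Im (f t * (g t)^* * expi (th t))) = (fun t =>
      (complex.Re (f t) * complex.Re (g t) + complex.Im (f t) * complex.Im (g t)) * sin (th t)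
      - (complex.Im (f t) * complex.Re (g t) - complex.Re (f t) * complex.Im (g t)) * (- cos (th t))).
      by apply/funext => t; exact: ImG.
    by have := mexpr mf1 mf2 mg1 mg2 ms (measurable_funN mc); exact.
  move=> t _ /=; rewrite lee_fin ImG (ger0_norm (y0 t)).
  have hcs : sin (th t) ^+ 2 + (- cos (th t)) ^+ 2 = 1 by rewrite sqrrN addrC cos2Dsin2.
  apply: le_trans (bound_aux _ _ _ _ _ _ hcs) _.
  lra.
Qed.


Lemma expi_eq (x y : R) (k l : nat) : x + 2 * pi * k%:R = y + 2 * pi * l%:R -> expi x = expi y.
Proof. by move=> h; rewrite -(expi_per x k) h expi_per. Qed.

Lemma mcos_aff (k tau : R) : measurable_fun setT (fun b : R => cos (- (k * (b - tau)))).
Proof.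
exact: (measurableT_comp (measurable_realfun.continuous_measurable_fun (@continuous_cos R))
  (measurable_funN (measurable_funM (measurable_cst k) (mshift tau)))).
Qed.

Lemma msin_aff (k tau : R) : measurable_fun setT (fun b : R => sin (- (k * (b - tau)))).
Proof.
exact: (measurableT_comp (measurable_realfun.continuous_measurable_fun (@continuous_sin R))
  (measurable_funN (measurable_funM (measurable_cst k) (mshift tau)))).
Qed.

End S.
Arguments cint {R}.
Arguments rint {R}.
Local Close Scope classical_set_scope.

Theorem proposition1 (R : realType) (M N : nat) (hM : (0 < M)%N) (hN : (0 < N)%N)
  (Delta c lam v : R) (alpha : R[i])
  (hDelta : 0 < Delta) (hc : 0 < c) (hlam : 0 < lam)
  (gtx grx : R -> R[i]) (htx : L2 gtx) (hrx : L2 grx)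
  (X : 'I_N -> 'I_M -> R[i]) (r : R -> R) (n : 'I_N) (m : 'I_M) :
  let T := Delta^-1 in
  YTF grx (ysig alpha gtx X Delta T c lam v r) Delta T n m
  = \sum_(n' < N) \sum_(m' < M)
      Hcoef alpha gtx grx Delta T c lam v r n m n' m' * X n' m'.
Proof.
move=> T.
pose tau (n' : 'I_N) := (n%:R - n'%:R) * T - r (n'%:R * T) / c.
pose nu (m' : 'I_M) := (m%:R - m'%:R) * Delta - v / lam.
pose G n' m' := fun b => gtx b * (grx (b - tau n'))^* * expi (- (2 * pi * nu m' * (b - tau n'))).
pose K (n' : 'I_N) (m' : 'I_M) := alpha * expi (2 * pi * (v / lam) * (n%:R * T))
  * expi (- (2 * pi * m'%:R * Delta * (r (n'%:R * T) / c))) * X n' m'.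
pose sh (n' : 'I_N) := r (n'%:R * T) / c + n'%:R * T.
have hG : forall n' m', cint (G n' m').
  move=> n' m'; apply: cint_base => //; first exact: L2_shift.
    exact: mcos_aff.
  exact: msin_aff.
have hKG : forall n' m', cint (fun t => K n' m' * G n' m' (t - sh n')).
  by move=> n' m'; apply: cintZ; apply: cint_shift.
have E : (fun t => ysig alpha gtx X Delta T c lam v r t * (grx (t - n%:R * T))^*
    * expi (- (2 * pi * m%:R * Delta * (t - n%:R * T))))
  = (fun t => \sum_(n' < N) \sum_(m' < M) K n' m' * G n' m' (t - sh n')).
  apply/funext => t; rewrite /ysig /xsig !big_distrl /=.
  apply: eq_bigr => n' _.
  rewrite big_distrr !big_distrl /=.
  apply: eq_bigr => m' _.
  have e1 : t - sh n' = t - r (n'%:R * T) / c - n'%:R * T by rewrite /sh; ring.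
  have e2 : t - sh n' - tau n' = t - n%:R * T by rewrite /sh /tau; ring.
  rewrite /G e2 e1 /K.
  set gA := gtx _; set gB := (grx _)^*.
  set eA := expi (2 * pi * m'%:R * Delta * _).
  set eB := expi (2 * pi * (v / lam) * t).
  set eC := expi (- (2 * pi * m%:R * Delta * _)).
  set eD := expi (2 * pi * (v / lam) * (n%:R * T)).
  set eE := expi (- (2 * pi * m'%:R * Delta * _)).
  set eG := expi (- (2 * pi * nu m' * _)).
  transitivity (alpha * X n' m' * gA * gB * (eA * eB * eC)); first by ring.
  transitivity (alpha * X n' m' * gA * gB * (eD * eE * eG)); last by ring.
  congr (_ * _); rewrite /eA /eB /eC /eD /eE /eG !expiD.
  apply: (@expi_eq _ _ _ (m' * n') (m' * n)).
  rewrite /nu /T !natrM; field.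
  by rewrite !gt_eqF.
rewrite /YTF E cintegral_sum; last by move=> n'; apply: cint_sum.
apply: eq_bigr => n' _.
rewrite cintegral_sum //.
apply: eq_bigr => m' _.
rewrite cintegralZ; last exact: cint_shift.
rewrite cintegral_shift //.
rewrite /Hcoef /xambig /K /G /tau /nu.
ring.
Qed.
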